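(* Let $G=(V,E)$ be a simple graph on vertices $V=\{1,\dots,n\}$, let $d_j$ denote the degree of vertex $j$, and let $\lambda$ be a real number. On $n$ qubits define $$\hat C=-\sum_{i=1}^n\big(\sigma^{(z)}_i+I\big)+\lambda\sum_{\{i,j\}\in E}\big(\sigma^{(z)}_i+I\big)\big(\sigma^{(z)}_j+I\big),\qquad \hat B=-\sum_{i=1}^n\sigma^{(x)}_i,$$ and $\ket{\varphi_0}=2^{-n/2}\sum_{z\in\{-1,1\}^n}\ket{z}$ (the uniform superposition over computational basis states). For real $\beta,\gamma$ let $\ket{\psi(\beta,\gamma)}=e^{-i\beta\hat B}e^{-i\gamma\hat C}\ket{\varphi_0}$. Then for every vertex $j$, $$J_j(\beta,\gamma):=\bra{\psi(\beta,\gamma)}\sigma^{(z)}_j\ket{\psi(\beta,\gamma)}=\sin(2\beta)\,\big(\cos(2\gamma\lambda)\big)^{d_j}\,\sin\!\big(2\gamma(1-d_j\lambda)\big).$$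
   Context: $\sigma^{(x)}_i,\sigma^{(z)}_i$ denote the Pauli $X$ and $Z$ matrices acting on qubit $i$ (identity elsewhere), and $I$ is the identity. Computational basis states $\ket{z}$, $z\in\{-1,1\}^n$, are labeled by the eigenvalues of the $\sigma^{(z)}_i$. $\hat C$ is the Hamiltonian encoding of the Maximum Independent Set penalized cost under $x_i\mapsto\frac12(I+\sigma^{(z)}_i)$; $\ket{\psi(\beta,\gamma)}$ is the depth-one QAOA state. *)

(* Defs.v *)
From mathcomp Require Import all_boot all_order all_algebra.
From mathcomp Require Import boolp classical_sets reals topology normedtype sequences trigo.
From mathcomp.real_closed Require Import complex.
Import GRing.Theory Num.Theory numFieldNormedType.Exports.
Local Open Scope ring_scope.
Local Open Scope complex_scope.

Section QAOA.
Variable R : realType.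
Local Notation C := R[i].

(* Computational basis states |z>, z in {-1,1}^n, encoded as bit-vectors:
   bit true  <-> eigenvalue +1 of sigma^z,  bit false <-> eigenvalue -1. *)
Definition basis (n : nat) := {ffun 'I_n -> bool}.
Definition spin (b : bool) : R := if b then 1 else -1.

Definition state n := basis n -> C.
Definition op n := basis n -> basis n -> C.

Definition op_mul n (A B : op n) : op n :=
  fun z w => \sum_(y : basis n) A z y * B y w.
Arguments op_mul {n}.
Definition op_id n : op n := fun z w => if z == w then 1 else 0.
Definition op_add n (A B : op n) : op n := fun z w => A z w + B z w.
Arguments op_add {n}.
Definition op_scale n (c : C) (A : op n) : op n := fun z w => c * A z w.
Arguments op_scale {n}.
Definition op_pow n (A : op n) (k : nat) : op n := iter k (op_mul A) (op_id n).
Arguments op_pow {n}.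
Definition op_sum n (I : finType) (P : pred I) (F : I -> op n) : op n :=
  fun z w => \sum_(i | P i) F i z w.
Arguments op_sum {n I}.
Definition apply n (A : op n) (v : state n) : state n :=
  fun z => \sum_(w : basis n) A z w * v w.
Arguments apply {n}.
Definition expect n (v : state n) (A : op n) : C :=
  \sum_(z : basis n) \sum_(w : basis n) (v z)^* * A z w * v w.
Arguments expect {n}.

Definition expop n (A : op n) : op n := fun z w =>
  let s := fun N : nat => \sum_(k < N) op_pow A k z w / (k`!)%:R in
  (limn (fun N => complex.Re (s N) : R^o)) +i* (limn (fun N => complex.Im (s N) : R^o)).
Arguments expop {n}.

Definition flip n (i : 'I_n) (z : basis n) : basis n :=
  [ffun k => if k == i then ~~ z k else z k].
Arguments flip {n}.
Definition sigma_x n (i : 'I_n) : op n :=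
  fun z w => if z == flip i w then 1 else 0.
Arguments sigma_x {n}.
Definition sigma_z n (i : 'I_n) : op n :=
  fun z w => if z == w then (spin (z i))%:C else 0.
Arguments sigma_z {n}.

Definition simple_graph n (adj : rel 'I_n) : Prop :=
  (forall i j, adj i j = adj j i) /\ (forall i, ~~ adj i i).
Arguments simple_graph {n}.
Definition degree n (adj : rel 'I_n) (j : 'I_n) : nat := #|[set k | adj j k]|.
Arguments degree {n}.

(* C_hat = - sum_i (Z_i + I) + lambda sum_{{i,j} in E} (Z_i + I)(Z_j + I);
   each unordered edge {i,j} is counted once, as the pair (i,j) with i < j. *)
Definition C_hat n (adj : rel 'I_n) (lambda : R) : op n :=
  op_add
    (op_scale (-1) (op_sum predT (fun i : 'I_n => op_add (sigma_z i) (op_id n))))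
    (op_scale lambda%:C
       (op_sum (fun p : 'I_n * 'I_n => (p.1 < p.2)%N && adj p.1 p.2)
          (fun p => op_mul (op_add (sigma_z p.1) (op_id n))
                           (op_add (sigma_z p.2) (op_id n))))).
Arguments C_hat {n}.

Definition B_hat n : op n :=
  op_scale (-1) (op_sum predT (fun i : 'I_n => sigma_x i)).

Definition phi0 n : state n := fun _ => ((Num.sqrt (2%:R ^+ n : R))^-1)%:C.

Definition psi n (adj : rel 'I_n) (lambda beta gamma : R) : state n :=
  apply (expop (op_scale (- ('i * beta%:C)) (B_hat n)))
    (apply (expop (op_scale (- ('i * gamma%:C)) (C_hat adj lambda))) (phi0 n)).

Arguments psi {n}.

End QAOA.

Arguments op_mul {R n}. Arguments op_id {R}. Arguments op_add {R n}.
Arguments op_scale {R n}. Arguments op_pow {R n}. Arguments op_sum {R n I}.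
Arguments apply {R n}. Arguments expect {R n}. Arguments expop {R n}.
Arguments flip {n}. Arguments sigma_x {R n}. Arguments sigma_z {R n}.
Arguments simple_graph {n}. Arguments degree {n}. Arguments C_hat {R n}.
Arguments B_hat {R}. Arguments phi0 {R}. Arguments psi {R n}.

(* Main.v *)
Require Import Defs.
From mathcomp Require Import all_boot all_order all_algebra.
From mathcomp Require Import boolp classical_sets reals topology normedtype sequences trigo.
From mathcomp.real_closed Require Import complex.
From mathcomp Require Import ring lra.
Import GRing.Theory Num.Theory numFieldNormedType.Exports.
Local Open Scope ring_scope.
Local Open Scope complex_scope.
Local Open Scope classical_set_scope.

Section S.
Variable R : realType.
Local Notation C := R[i].
Local Notation Re := (@complex.Re R).
Local Notation Im := (@complex.Im R).

Definition E (t : R) : C := cos t +i* sin t.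

Lemma ReD (x y : C) : Re (x + y) = Re x + Re y. Proof. by case: x => a b; case: y => c d. Qed.
Lemma ImD (x y : C) : Im (x + y) = Im x + Im y. Proof. by case: x => a b; case: y => c d. Qed.
Lemma ReMr (x : C) (r : R) : Re (x * r%:C) = Re x * r.
Proof. by case: x => a b /=; rewrite mulr0 subr0. Qed.
Lemma ImMr (x : C) (r : R) : Im (x * r%:C) = Im x * r.
Proof. by case: x => a b /=; rewrite mulr0 add0r. Qed.
Lemma ReM (x y : C) : Re (x * y) = Re x * Re y - Im x * Im y.
Proof. by case: x => a b; case: y => c d. Qed.
Lemma ImM (x y : C) : Im (x * y) = Re x * Im y + Im x * Re y.
Proof. by case: x => a b; case: y => c d /=; rewrite addrC. Qed.
Lemma Re_sum (I : Type) (r : seq I) (P : pred I) (F : I -> C) :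
  Re (\sum_(i <- r | P i) F i) = \sum_(i <- r | P i) Re (F i).
Proof. by apply: (big_morph _ ReD). Qed.
Lemma Im_sum (I : Type) (r : seq I) (P : pred I) (F : I -> C) :
  Im (\sum_(i <- r | P i) F i) = \sum_(i <- r | P i) Im (F i).
Proof. by apply: (big_morph _ ImD). Qed.

Lemma cvg_sum_seq (I : Type) (r : seq I) (f : I -> nat -> R^o) (l : I -> R^o) :
  (forall i, f i @ \oo --> l i) ->
  (fun N => \sum_(i <- r) f i N) @ \oo --> \sum_(i <- r) l i.
Proof.
move=> H; elim: r => [|a r IH].
  rewrite big_nil; under eq_fun do rewrite big_nil; exact: cvg_cst.
rewrite big_cons; under eq_fun do rewrite big_cons.
exact: cvgD.
Qed.

Lemma expi_pow (k : nat) : ('i : C) ^+ k =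
  if odd k then ((-1) ^+ k./2 : R)%:C * 'i else ((-1) ^+ k./2 : R)%:C.
Proof.
rewrite -{1}(odd_double_half k) exprD -muln2 mulnC exprM sqr_i.
rewrite rmorphXn rmorphN1.
by case: (odd k); rewrite /= ?expr1 ?expr0 ?mul1r // mulrC.
Qed.

Definition eN (t : R) (N : nat) : C := \sum_(k < N) ('i * t%:C) ^+ k / (k`!)%:R.

Lemma eN_term t k : ('i * t%:C) ^+ k / (k`!)%:R =
  ('i : C) ^+ k * (t ^+ k / (k`!)%:R)%:C.
Proof. by rewrite exprMn -mulrA rmorphM /= fmorphV rmorphXn /= rmorph_nat. Qed.

Lemma ReiX k : Re (('i : C) ^+ k) = (~~ odd k)%:R * (-1) ^+ k./2.
Proof.
by rewrite expi_pow; case: (odd k) => /=; rewrite ?mul0r ?mul1r ?subr0 ?mulr0.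
Qed.

Lemma ImiX k : Im (('i : C) ^+ k) = (odd k)%:R * (-1) ^+ k.-1./2.
Proof.
rewrite expi_pow; case Ho: (odd k) => /=.
  rewrite ?mul0r ?mul1r ?mulr1 ?add0r ?addr0; congr (_ ^+ _).
  set m := k./2; have -> : k = (m.*2).+1 by rewrite /m -[LHS]odd_double_half Ho.
  by rewrite /= doubleK.
by rewrite ?mul0r ?mulr0 ?addr0.
Qed.

Lemma eN_Re t : (fun N => Re (eN t N) : R^o) @ \oo --> cos t.
Proof.
have H := @is_cvg_series_cos_coeff R t.
have -> : cos t = limn (series (cos_coeff t)) by rewrite cos.unlock.
have -> : (fun N => Re (eN t N) : R^o) = series (cos_coeff t); last exact: H.
apply/funext => N; rewrite /eN /series /= Re_sum big_mkord; apply: eq_bigr => k _.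
by rewrite eN_term ReMr ReiX /cos_coeff /= !mulrA.
Qed.

Lemma eN_Im t : (fun N => Im (eN t N) : R^o) @ \oo --> sin t.
Proof.
have H := @is_cvg_series_sin_coeff R t.
have -> : sin t = limn (series (sin_coeff t)) by rewrite sin.unlock.
have -> : (fun N => Im (eN t N) : R^o) = series (sin_coeff t); last exact: H.
apply/funext => N; rewrite /eN /series /= Im_sum big_mkord; apply: eq_bigr => k _.
by rewrite eN_term ImMr ImiX /sin_coeff /= !mulrA.
Qed.


Lemma op_pow_diag n (A U V : op R n) (d : Defs.basis n -> C) :
  (forall z w, \sum_y U z y * V y w = op_id n z w) ->
  (forall z w, \sum_y V z y * U y w = op_id n z w) ->
  (forall z w, A z w = \sum_y U z y * d y * V y w) ->
  forall k z w, op_pow A k z w = \sum_y U z y * d y ^+ k * V y w.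
Proof.
move=> HUV HVU HA; elim=> [|k IH] z w.
  by rewrite /= -HUV; apply: eq_bigr => y _; rewrite expr0 mulr1.
have -> : op_pow A k.+1 z w = \sum_y A z y * op_pow A k y w by [].
under eq_bigr do rewrite IH HA big_distrl /=.
rewrite exchange_big /=; apply: eq_bigr => y' _.
under eq_bigr do rewrite big_distrr /=.
rewrite exchange_big /=.
rewrite (bigD1 y') //= [X in _ + X]big1 ?addr0.
  transitivity (U z y' * d y' * (\sum_x V y' x * U x y') * (d y' ^+ k * V y' w)).
    by rewrite big_distrr big_distrl; apply: eq_bigr => x _ /=; ring.
  by rewrite HVU /op_id eqxx mulr1 exprS; ring.
move=> y Hy.
transitivity (U z y' * d y' * (\sum_x V y' x * U x y) * (d y ^+ k * V y w)).
  by rewrite big_distrr big_distrl; apply: eq_bigr => x _ /=; ring.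
by rewrite HVU /op_id eq_sym (negbTE Hy) mulr0 mul0r.
Qed.


Lemma cplxE (x : C) : x = Re x +i* Im x. Proof. by case: x. Qed.

Lemma expop_diag n (A U V : op R n) (a : Defs.basis n -> R) :
  (forall z w, \sum_y U z y * V y w = op_id n z w) ->
  (forall z w, \sum_y V z y * U y w = op_id n z w) ->
  (forall z w, A z w = \sum_y U z y * ('i * (a y)%:C) * V y w) ->
  forall z w, expop A z w = \sum_y U z y * E (a y) * V y w.
Proof.
move=> HUV HVU HA z w.
have Hp := @op_pow_diag n A U V _ HUV HVU HA.
pose c := fun y => U z y * V y w.
have Hs : forall N, \sum_(k < N) op_pow A k z w / (k`!)%:R = \sum_y c y * eN (a y) N.
  move=> N; under eq_bigr do rewrite Hp big_distrl /=.
  rewrite exchange_big /=; apply: eq_bigr => y _; rewrite /c /eN big_distrr /=.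
  by apply: eq_bigr => k _; rewrite exprMn; ring.
have -> : \sum_y U z y * E (a y) * V y w = \sum_y c y * E (a y).
  by apply: eq_bigr => y _; rewrite /c; ring.
rewrite [RHS]cplxE Re_sum Im_sum /expop /=.
congr (_ +i* _); apply: norm_cvg_lim.
- under eq_fun do rewrite Hs Re_sum.
  apply: cvg_sum_seq => y; under eq_fun do rewrite ReM.
  rewrite ReM /=.
  apply: cvgB; [apply: cvgMl_tmp; exact: eN_Re | apply: cvgMl_tmp; exact: eN_Im].
- under eq_fun do rewrite Hs Im_sum.
  apply: cvg_sum_seq => y; under eq_fun do rewrite ImM.
  rewrite ImM /=.
  apply: cvgD; [apply: cvgMl_tmp; exact: eN_Im | apply: cvgMl_tmp; exact: eN_Re].
Qed.


Lemma E_alt t : E t = (cos t)%:C + 'i * (sin t)%:C.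
Proof. by rewrite /E [LHS]cplxE /= [RHS]cplxE /= !mul0r !mul1r !subr0 !addr0 !add0r. Qed.

Lemma E_add s t : E (s + t) = E s * E t.
Proof. by rewrite /E cosD sinD /= [X in _ +i* X]addrC. Qed.

Lemma E0 : E 0 = 1.
Proof. by rewrite /E cos0 sin0. Qed.

Lemma E_sum (I : Type) (r : seq I) (P : pred I) (f : I -> R) :
  E (\sum_(i <- r | P i) f i) = \prod_(i <- r | P i) E (f i).
Proof. exact: (big_morph _ E_add E0). Qed.

Definition hh (a b : bool) : C := if ~~ a && ~~ b then -1 else 1.
Definition UH n : op R n := fun z y => \prod_i (hh (z i) (y i) / 2).
Definition VH n : op R n := fun y w => \prod_i hh (y i) (w i).

Lemma sum_prod n (F : 'I_n -> bool -> C) :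
  \sum_(y : Defs.basis n) \prod_i F i (y i) = \prod_i \sum_b F i b.
Proof. by rewrite bigA_distr_bigA. Qed.

Lemma prod_ind n (f : 'I_n -> bool) :
  \prod_i (if f i then 1 else 0 : C) = if [forall i, f i] then 1 else 0.
Proof.
case: (boolP [forall i, f i]) => [/forallP H|/forallPn [i Hi]].
  by rewrite big1 // => i _; rewrite H.
by rewrite (bigD1 i) //= (negbTE Hi) mul0r.
Qed.

Lemma prod_pick n (i : 'I_n) (g : 'I_n -> C) :
  \prod_k (if k == i then g k else 1) = g i.
Proof. by rewrite (bigD1 i) //= eqxx big1 ?mulr1 // => k /negbTE ->. Qed.

Lemma eq_ffunE n (z w : Defs.basis n) : (z == w) = [forall i, z i == w i].
Proof. by apply/eqP/forallP => [-> i //|H]; apply/ffunP => i; exact/eqP. Qed.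

Lemma hsum1 a c : \sum_b (hh a b / 2 * hh b c) = if a == c then 1 else 0.
Proof. by case: a; case: c; rewrite big_bool /hh /=; field. Qed.

Lemma hsum2 a c : \sum_b (hh a b * (hh b c / 2)) = if a == c then 1 else 0.
Proof. by case: a; case: c; rewrite big_bool /hh /=; field. Qed.

Lemma hsum3 a c : \sum_b (hh a b / 2 * (spin R b)%:C * hh b c) = if a != c then 1 else 0.
Proof. by case: a; case: c; rewrite big_bool /hh /spin /= ?rmorphN ?rmorph1; field. Qed.

Lemma HUV n : forall z w, \sum_y UH n z y * VH n y w = op_id n z w.
Proof.
move=> z w; under eq_bigr do rewrite /UH /VH -big_split /=.
rewrite (@sum_prod n (fun k b => hh (z k) b / 2 * hh b (w k))).
under eq_bigr do rewrite hsum1.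
by rewrite prod_ind -eq_ffunE.
Qed.

Lemma HVU n : forall z w, \sum_y VH n z y * UH n y w = op_id n z w.
Proof.
move=> z w; under eq_bigr do rewrite /UH /VH -big_split /=.
rewrite (@sum_prod n (fun k b => hh (z k) b * (hh b (w k) / 2))).
under eq_bigr do rewrite hsum2.
by rewrite prod_ind -eq_ffunE.
Qed.


Definition aB n (beta : R) (y : Defs.basis n) : R := beta * \sum_i spin R (y i).
Arguments aB {n}.

Lemma HAB n (beta : R) z w : op_scale (-('i * beta%:C)) (B_hat n) z w =
  \sum_y UH n z y * ('i * (aB beta y)%:C) * VH n y w.
Proof.
transitivity ('i * beta%:C * \sum_i \sum_y UH n z y * (spin R (y i))%:C * VH n y w); last first.
  rewrite exchange_big big_distrr; apply: eq_bigr => y _ /=.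
  rewrite /aB rmorphM rmorph_sum /=.
  rewrite (_ : \sum_i UH n z y * (spin R (y i))%:C * VH n y w
     = UH n z y * VH n y w * \sum_i (spin R (y i))%:C); first ring.
  by rewrite big_distrr; apply: eq_bigr => i _ /=; ring.
rewrite /op_scale /B_hat /op_scale /op_sum /sigma_x /=.
rewrite mulN1r mulrNN; congr (_ * _); apply: eq_bigr => i _.
transitivity (\sum_(y : Defs.basis n) \prod_k (hh (z k) (y k) / 2 *
    (if k == i then (spin R (y k))%:C else 1) * hh (y k) (w k))).
  rewrite (@sum_prod n (fun k b => hh (z k) b / 2 *
    (if k == i then (spin R b)%:C else 1) * hh b (w k))).
  rewrite (eq_bigr (fun k => if (if k == i then z k != w k else z k == w k) then 1 else 0)).
    rewrite prod_ind; congr (if _ then _ else _).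
    rewrite eq_ffunE; apply: eq_forallb => k; rewrite /flip ffunE.
    by case: (k == i) => //; case: (z k); case: (w k).
  move=> k _; case: (k == i).
    exact: hsum3.
  under eq_bigr do rewrite mulr1; exact: hsum1.
apply: eq_bigr => y _; rewrite /UH /VH -(@prod_pick n i (fun k => (spin R (y k))%:C)) -!big_split /=.
by apply: eq_bigr => k _; case: (k == i).
Qed.

Definition uB (beta : R) (a c : bool) : C :=
  if a == c then (cos beta)%:C else 'i * (sin beta)%:C.

Lemma hsum4 (beta : R) a c :
  \sum_b (hh a b / 2 * E (beta * spin R b) * hh b c) = uB beta a c.
Proof.
have Hc : (cos (- beta))%:C = (cos beta)%:C :> C by rewrite cosN.
have Hs : (sin (- beta))%:C = - (sin beta)%:C :> C by rewrite sinN rmorphN.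
by case: a; case: c; rewrite big_bool /hh /spin /uB /= ?mulr1 ?mulrN1 !E_alt ?Hc ?Hs; field.
Qed.

Lemma UB_formula n (beta : R) z w :
  expop (op_scale (-('i * beta%:C)) (B_hat n)) z w = \prod_k uB beta (z k) (w k).
Proof.
rewrite (@expop_diag n _ (UH n) (VH n) (aB beta) (@HUV n) (@HVU n) (@HAB n beta)).
transitivity (\sum_(y : Defs.basis n) \prod_k (hh (z k) (y k) / 2 * E (beta * spin R (y k)) * hh (y k) (w k))).
  by apply: eq_bigr => y _; rewrite /UH /VH /aB mulr_sumr E_sum -!big_split.
rewrite (@sum_prod n (fun k b => hh (z k) b / 2 * E (beta * spin R b) * hh b (w k))).
by apply: eq_bigr => k _; rewrite hsum4.
Qed.


Definition xs n (w : Defs.basis n) (i : 'I_n) : R := spin R (w i) + 1.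
Arguments xs {n}.
Definition Cv n (adj : rel 'I_n) (lambda : R) (w : Defs.basis n) : R :=
  - \sum_i xs w i + lambda *
    \sum_(p : 'I_n * 'I_n | (p.1 < p.2)%N && adj p.1 p.2) xs w p.1 * xs w p.2.
Arguments Cv {n}.

Lemma xs_flip n (j k : 'I_n) w : k != j -> xs (flip j w) k = xs w k.
Proof. by move=> Hk; rewrite /xs /flip ffunE (negbTE Hk). Qed.

Lemma xs_flipj n (j : 'I_n) w : xs w j - xs (flip j w) j = 2 * spin R (w j).
Proof. by rewrite /xs /flip ffunE eqxx; case: (w j); rewrite /spin /=; ring. Qed.

Lemma Cv_diff n (adj : rel 'I_n) (Hg : simple_graph adj) lambda j w :
  Cv adj lambda w - Cv adj lambda (flip j w) =
  - (2 * spin R (w j)) * (1 - lambda * \sum_(k | adj j k) xs w k).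
Proof.
case: Hg => Hsym Hirr.
have D1 : \sum_i xs w i - \sum_i xs (flip j w) i = 2 * spin R (w j).
  rewrite -sumrB (bigD1 j) //= big1 ?addr0 ?xs_flipj // => k Hk.
  by rewrite xs_flip // subrr.
set d := xs w j - xs (flip j w) j.
have D2 : \sum_(p : 'I_n * 'I_n | (p.1 < p.2)%N && adj p.1 p.2) xs w p.1 * xs w p.2
    - \sum_(p : 'I_n * 'I_n | (p.1 < p.2)%N && adj p.1 p.2) xs (flip j w) p.1 * xs (flip j w) p.2
    = d * \sum_(k | adj j k) xs w k.
  rewrite -sumrB.
  transitivity (\sum_(a : 'I_n) \sum_(b : 'I_n) (if ((a < b)%N && adj a b) then
      xs w a * xs w b - xs (flip j w) a * xs (flip j w) b else 0)).
    rewrite pair_big big_mkcond; apply: eq_big => // [[a b]] //.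
  rewrite (bigD1 j) //=.
  have -> : \sum_(a | a != j) \sum_(b : 'I_n) (if (a < b)%N && adj a b
        then xs w a * xs w b - xs (flip j w) a * xs (flip j w) b else 0)
      = \sum_(a | a != j) (if (a < j)%N && adj a j then xs w a * d else 0).
    apply: eq_bigr => a Ha; rewrite (bigD1 j) //= big1 ?addr0.
      by case: ifP => // _; rewrite (xs_flip _ _ _ _ Ha) /d; ring.
    move=> b Hb; case: ifP => // _.
    by rewrite (xs_flip _ _ _ _ Ha) (xs_flip _ _ _ _ Hb) subrr.
  rewrite (bigD1 j) //= ltnn /= add0r.
  rewrite [in RHS]big_mkcond [RHS]mulr_sumr [in RHS](bigD1 j) //= (negbTE (Hirr j)) mulr0 add0r.
  rewrite -big_split /=; apply: eq_bigr => b Hb.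
  rewrite (Hsym b j).
  case: (adj j b); last by rewrite !andbF addr0 mulr0.
  rewrite !andbT.
  case: ltngtP => H.
  - by rewrite addr0 (xs_flip _ _ _ _ Hb) /d; ring.
  - by rewrite add0r /d; ring.
  - by move: Hb; rewrite (_ : b = j) ?eqxx //; apply/val_inj.
rewrite /Cv.
set S1 := \sum_(p : 'I_n * 'I_n | _) _ in D2 *.
set S2 := \sum_(p : 'I_n * 'I_n | _) _ in D2 *.
set T1 := \sum_i xs w i in D1 *.
set T2 := \sum_i xs (flip j w) i in D1 *.
have -> : - T1 + lambda * S1 - (- T2 + lambda * S2) = - (T1 - T2) + lambda * (S1 - S2) by ring.
by rewrite D1 D2 /d xs_flipj; ring.
Qed.


Lemma diag_mul n (z w : Defs.basis n) (f g : Defs.basis n -> C) :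
  \sum_y (if z == y then f y else 0) * (if y == w then g y else 0) =
  if z == w then f z * g z else 0.
Proof.
rewrite (bigD1 z) //= eqxx big1 ?addr0.
  by case: (z == w); rewrite ?mulr0.
by move=> y; rewrite eq_sym => /negbTE ->; rewrite mul0r.
Qed.
Arguments diag_mul {n}.

Lemma sum_id3 n (z w : Defs.basis n) (f : Defs.basis n -> C) :
  \sum_y op_id n z y * f y * op_id n y w = if z == w then f z else 0.
Proof.
transitivity (if z == w then f z * 1 else 0); last by rewrite mulr1.
rewrite -(diag_mul z w f (fun _ => 1)) /op_id.
apply: eq_bigr => y _; case: (z == y); case: (y == w); rewrite ?mulr1 ?mulr0 ?mul0r ?mul1r //.
Qed.
Arguments sum_id3 {n}.

Lemma sigma_id n (i : 'I_n) z w :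
  op_add (sigma_z i) (op_id n) z w = if z == w then (xs z i)%:C else 0 :> C.
Proof.
rewrite /op_add /sigma_z /op_id /xs; case: (z == w); last by rewrite addr0.
by rewrite rmorphD.
Qed.

Lemma C_hat_diag n (adj : rel 'I_n) (lambda : R) z w :
  C_hat adj lambda z w = if z == w then (Cv adj lambda z)%:C else 0.
Proof.
rewrite /C_hat /op_add /op_scale /op_sum /op_mul.
under eq_bigr do rewrite -/(op_add _ _ z w) sigma_id.
under [X in _ + _ * X]eq_bigr do under eq_bigr do rewrite -!/(op_add _ _ _ _) !sigma_id.
have Hin : forall p : 'I_n * 'I_n,
  \sum_y (if z == y then (xs z p.1)%:C else 0) * (if y == w then (xs y p.2)%:C else 0)
  = if z == w then (xs z p.1 * xs z p.2)%:C else 0 :> C.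
  move=> p; rewrite (bigD1 z) //= eqxx big1 ?addr0.
    by case: (z == w); rewrite ?mulr0 // rmorphM.
  by move=> y; rewrite eq_sym => /negbTE ->; rewrite mul0r.
under [X in _ + _ * X]eq_bigr do rewrite Hin.
case: (z == w).
  rewrite /Cv rmorphD rmorphN rmorphM !rmorph_sum /= mulN1r.
  by congr (- _ + _ * _).
by rewrite !big1 ?mulr0 ?addr0.
Qed.

Definition aC n (adj : rel 'I_n) (lambda gamma : R) (y : Defs.basis n) : R :=
  - (gamma * Cv adj lambda y).
Arguments aC {n}.

Lemma UC_formula n (adj : rel 'I_n) (lambda gamma : R) z w :
  expop (op_scale (-('i * gamma%:C)) (C_hat adj lambda)) z w =
  if z == w then E (aC adj lambda gamma z) else 0.
Proof.
have H1 : forall z w : Defs.basis n, \sum_y op_id n z y * op_id n y w = op_id n z w :> C.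
  move=> z' w'; rewrite /op_id (bigD1 z') //= eqxx mul1r big1 ?addr0 //.
  by move=> y; rewrite eq_sym => /negbTE ->; rewrite mul0r.
rewrite (@expop_diag n _ (op_id n) (op_id n) (aC adj lambda gamma) H1 H1).
  by rewrite sum_id3.
move=> z' w'; rewrite sum_id3 /op_scale C_hat_diag /aC.
case: (z' == w'); rewrite ?mulr0 //.
by rewrite rmorphN rmorphM /=; ring.
Qed.


Lemma conjE (x : C) : Num.conj x = conjc x. Proof. by []. Qed.

Ltac csimp := apply/eqP; rewrite eq_complex /=; apply/andP; split; apply/eqP.

Lemma conj_E t : (E t)^* = E (- t).
Proof. by rewrite /E cosN sinN. Qed.

Lemma conj_uB (beta : R) a c :
  (uB beta a c)^* = if a == c then (cos beta)%:C else - ('i * (sin beta)%:C).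
Proof. rewrite /uB; case: (a == c); csimp; ring. Qed.

Lemma gsum_other (beta : R) a a' :
  \sum_b ((uB beta b a)^* * uB beta b a') = if a == a' then 1 else 0.
Proof.
have h := cos2Dsin2 beta.
rewrite big_bool /= !conjE !conj_uB /uB.
case: a; case: a' => /=; csimp; (try rewrite -[RHS]h); ring.
Qed.

Lemma gsum_j (beta : R) a a' :
  \sum_b ((spin R b)%:C * (uB beta b a)^* * uB beta b a') =
  if a == a' then (spin R a * cos (2 * beta))%:C
  else 'i * (spin R a * sin (2 * beta))%:C.
Proof.
have -> : 2 * beta = beta + beta by ring.
rewrite cosD sinD big_bool /= !conjE !conj_uB /uB /spin.
case: a; case: a' => /=; csimp; ring.
Qed.

Lemma E_pow t d : E t ^+ d = E (d%:R * t).
Proof.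
elim: d => [|d IH]; first by rewrite expr0 mul0r E0.
by rewrite exprS IH -E_add mulrSr; congr E; ring.
Qed.

Lemma E_sub t : E (- t) - E t = - ('i * (2 * sin t)%:C).
Proof. rewrite /E cosN sinN; csimp; ring. Qed.

Lemma E_half t : E (t + t) + 1 = 2 * (E t * (cos t)%:C).
Proof.
have h := cos2Dsin2 t.
rewrite /E cosD sinD; csimp; nra.
Qed.


Lemma split_bit n (j : 'I_n) (H : bool -> Defs.basis n -> C) :
  \sum_(w : Defs.basis n) H (w j) w =
  \sum_b \sum_(w : Defs.basis n) (if w j == b then H b w else 0).
Proof.
rewrite exchange_big /=; apply: eq_bigr => w _; rewrite big_bool /=.
by case: (w j) => /=; rewrite ?addr0 ?add0r.
Qed.

Lemma prod_split_j n (j : 'I_n) (q r : 'I_n -> C) :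
  \prod_k (if k == j then q k else r k) = q j * \prod_(k | k != j) r k.
Proof.
rewrite (bigD1 j) //= eqxx; congr (_ * _).
by apply: eq_bigr => k /negbTE ->.
Qed.

Lemma prod_ind_except n (j : 'I_n) (f : 'I_n -> bool) :
  \prod_(k | k != j) (if f k then 1 else 0 : C) =
  if [forall k, (k != j) ==> f k] then 1 else 0.
Proof.
rewrite -prod_ind big_mkcond; apply: eq_bigr => k _.
by case: (k != j).
Qed.

Lemma collapse n (j : 'I_n) (w : Defs.basis n) (F : Defs.basis n -> C) :
  \sum_(w' : Defs.basis n) F w' * (if [forall k, (k != j) ==> (w k == w' k)] then 1 else 0) =
  F w + F (flip j w).
Proof.
transitivity (\sum_(w' : Defs.basis n | [forall k, (k != j) ==> (w k == w' k)]) F w').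
  rewrite [RHS]big_mkcond; apply: eq_bigr => w' _.
  by case: ifP => _; rewrite ?mulr1 ?mulr0.
have Hf : flip j w != w.
  apply/negP => /eqP/ffunP/(_ j); rewrite /flip ffunE eqxx.
  by case: (w j).
rewrite (bigD1 w); last by apply/forallP => k; rewrite eqxx implybT.
rewrite (bigD1 (flip j w)) /=; last first.
  rewrite Hf andbT; apply/forallP => k; apply/implyP => Hk.
  by rewrite /flip ffunE (negbTE Hk).
rewrite big1 ?addr0 //.
move=> w' /andP [/andP [/forallP Hw' Hne1] Hne2]; exfalso.
case Hj: (w' j == w j).
  move/eqP: Hne1; apply; apply/ffunP => k.
  case: (eqVneq k j) => [->|Hk]; first exact/eqP.
  by move/implyP: (Hw' k) => /(_ Hk) /eqP.
move/eqP: Hne2; apply; apply/ffunP => k; rewrite /flip ffunE.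
case: (eqVneq k j) => [->|Hk].
  by move: Hj; case: (w' j); case: (w j).
by move/implyP: (Hw' k) => /(_ Hk) /eqP.
Qed.


Lemma prod_adj n (adj : rel 'I_n) (Hg : simple_graph adj) (j : 'I_n) (B : C) :
  \prod_k (if k == j then 2^-1 else if adj j k then B else 1) =
  2^-1 * B ^+ degree adj j.
Proof.
case: Hg => Hsym Hirr.
rewrite (@prod_split_j n j (fun _ => 2^-1)); congr (_ * _).
rewrite -big_mkcondr /degree -prodr_const; apply: eq_bigl => k.
rewrite inE; case: (eqVneq k j) => [->|]; last by [].
by rewrite (negbTE (Hirr j)).
Qed.

Lemma T_lemma n (adj : rel 'I_n) (Hg : simple_graph adj) (lambda gamma : R) j :
  \sum_(w : Defs.basis n) (\prod_(k : 'I_n) (2^-1 : C)) * (spin R (w j))%:C *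
    E (gamma * (- (2 * spin R (w j))) * (1 - lambda * \sum_(k | adj j k) xs w k))
  = - ('i * (cos (2 * gamma * lambda) ^+ degree adj j *
             sin (2 * gamma * (1 - (degree adj j)%:R * lambda)))%:C).
Proof.
have Hirr := Hg.2.
pose g (b : bool) (k : 'I_n) (c : bool) : C :=
  (if adj j k then E (2 * gamma * lambda * spin R b * (spin R c + 1)) else 1) * 2^-1.
pose Hb (b : bool) (w : Defs.basis n) : C :=
  (spin R b)%:C * E (- (2 * gamma * spin R b)) * \prod_k g b k (w k).
transitivity (\sum_(w : Defs.basis n) Hb (w j) w).
  apply: eq_bigr => w _; rewrite /Hb.
  have -> : gamma * - (2 * spin R (w j)) * (1 - lambda * \sum_(k | adj j k) xs w k)
     = - (2 * gamma * spin R (w j)) +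
       \sum_(k | adj j k) (2 * gamma * lambda * spin R (w j) * xs w k).
    by rewrite -mulr_sumr; ring.
  rewrite E_add E_sum.
  rewrite /g big_split /= -big_mkcond /xs.
  ring.
rewrite split_bit.
pose Bb (b : bool) : C := E (2 * gamma * lambda * spin R b) * (cos (2 * gamma * lambda))%:C.
transitivity (\sum_b (spin R b)%:C * E (- (2 * gamma * spin R b)) * (2^-1 * Bb b ^+ degree adj j)).
  apply: eq_bigr => b _.
  transitivity ((spin R b)%:C * E (- (2 * gamma * spin R b)) *
     \sum_(w : Defs.basis n) \prod_k ((if k == j then (if w k == b then 1 else 0) else 1) * g b k (w k))).
    rewrite mulr_sumr; apply: eq_bigr => w _.
    rewrite big_split /= prod_pick /Hb.
    case: (w j == b); [rewrite mul1r; reflexivity | by rewrite mul0r mulr0].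
  congr (_ * _).
  rewrite (@sum_prod n (fun k c => (if k == j then (if c == b then 1 else 0) else 1) * g b k c)).
  rewrite -(@prod_adj n adj Hg j (Bb b)); apply: eq_bigr => k _.
  rewrite big_bool /=.
  case: (eqVneq k j) => [->|Hk].
    rewrite /g (negbTE (Hirr j)).
    by case: b; rewrite /= ?mul1r ?mul0r ?addr0 ?add0r.
  rewrite !mul1r /g; case: (adj j k) => /=; last by field.
  rewrite /Bb /spin /=.
  set t := 2 * gamma * lambda * (if b then 1 else -1).
  have Ht : cos t = cos (2 * gamma * lambda).
    by rewrite /t; case: (b); rewrite ?mulr1 ?mulrN1 ?cosN.
  rewrite addNr mulr0 E0 (_ : t * (1 + 1) = t + t); last by ring.
  rewrite -mulrDl E_half Ht; field.
1: by [].
set c := cos (2 * gamma * lambda); set d := degree adj j.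
set u := 2 * gamma * (1 - d%:R * lambda).
have H1 : E (- (2 * gamma * 1)) * E (d%:R * (2 * gamma * lambda * 1)) = E (- u).
  by rewrite -E_add /u; congr E; ring.
have H2 : E (- (2 * gamma * -1)) * E (d%:R * (2 * gamma * lambda * -1)) = E u.
  by rewrite -E_add /u; congr E; ring.
rewrite big_bool /= /Bb /spin /= !exprMn !E_pow.
transitivity (2^-1 * c%:C ^+ d * (E (- u) - E u)).
  rewrite -H1 -H2 rmorph1 rmorphN1; ring.
rewrite E_sub !rmorphM rmorphXn rmorph_nat /=; field.
all: by [].
Qed.


Lemma sum_spin0 n (j : 'I_n) : \sum_(w : Defs.basis n) (spin R (w j))%:C = 0 :> C.
Proof.
transitivity (\sum_(w : Defs.basis n) \prod_k (if k == j then (spin R (w k))%:C else 1)).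
  by apply: eq_bigr => w _; rewrite prod_pick.
rewrite (@sum_prod n (fun k b => if k == j then (spin R b)%:C else 1)).
rewrite (bigD1 j) //= eqxx big_bool /= /spin rmorph1 rmorphN1 addrN.
by rewrite mul0r.
Qed.

Lemma main_sec n (adj : rel 'I_n) (Hg : simple_graph adj) (lambda beta gamma : R)
    (j : 'I_n) :
  expect (psi adj lambda beta gamma) (sigma_z j) =
  (sin (2 * beta) * (cos (2 * gamma * lambda)) ^+ degree adj j
     * sin (2 * gamma * (1 - (degree adj j)%:R * lambda)))%:C.
Proof.
pose s : C := ((Num.sqrt (2 ^+ n : R))^-1)%:C.
pose pC (w : Defs.basis n) := E (aC adj lambda gamma w) * s.
pose UB (z w : Defs.basis n) := \prod_k uB beta (z k) (w k).
have Hpsi : forall z, psi adj lambda beta gamma z = \sum_w UB z w * pC w.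
  move=> z; rewrite /psi /apply; apply: eq_bigr => w _; rewrite UB_formula; congr (_ * _).
  rewrite (bigD1 w) //= UC_formula eqxx big1 ?addr0 //.
  move=> w' Hw'; rewrite UC_formula eq_sym (negbTE Hw') mul0r //.
have Hexp : expect (psi adj lambda beta gamma) (sigma_z j) =
    \sum_(z : Defs.basis n) Num.conj (psi adj lambda beta gamma z) * (spin R (z j))%:C *
       psi adj lambda beta gamma z.
  rewrite /expect; apply: eq_bigr => z _; rewrite (bigD1 z) //= big1 ?addr0.
    by rewrite /sigma_z eqxx.
  by move=> w Hw; rewrite /sigma_z eq_sym (negbTE Hw) mulr0 mul0r.
rewrite Hexp.
pose G (w w' : Defs.basis n) := \sum_(z : Defs.basis n) (spin R (z j))%:C * Num.conj (UB z w) * UB z w'.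
transitivity (\sum_w \sum_w' Num.conj (pC w) * pC w' * G w w').
  under eq_bigr do rewrite !Hpsi rmorph_sum !mulr_suml.
  under eq_bigr do under eq_bigr do rewrite mulr_sumr.
  rewrite exchange_big /=; apply: eq_bigr => w _.
  rewrite exchange_big /=; apply: eq_bigr => w' _.
  rewrite /G mulr_sumr; apply: eq_bigr => z _.
  rewrite rmorphM /=; ring.
pose gjv (a a' : bool) : C := if a == a' then (spin R a * cos (2 * beta))%:C
  else 'i * (spin R a * sin (2 * beta))%:C.
have HG : forall w w', G w w' = gjv (w j) (w' j) *
    (if [forall k, (k != j) ==> (w k == w' k)] then 1 else 0).
  move=> w w'; rewrite /G.
  transitivity (\sum_(z : Defs.basis n) \prod_k ((if k == j then (spin R (z k))%:C else 1) *
      Num.conj (uB beta (z k) (w k)) * uB beta (z k) (w' k))).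
    apply: eq_bigr => z _; rewrite !big_split /= prod_pick /UB rmorph_prod //.
  rewrite (@sum_prod n (fun k b => (if k == j then (spin R b)%:C else 1) *
      Num.conj (uB beta b (w k)) * uB beta b (w' k))).
  rewrite (eq_bigr (fun k => if k == j then gjv (w j) (w' j)
      else (if w k == w' k then 1 else 0))); last first.
    move=> k _; case: (eqVneq k j) => [->|Hk].
      exact: gsum_j.
    under eq_bigr do rewrite mul1r.
    exact: gsum_other.
  by rewrite (@prod_split_j n j (fun _ => gjv (w j) (w' j))
     (fun k => if w k == w' k then 1 else 0)) prod_ind_except.
have HcE : forall a, Num.conj (E a * s) = E (- a) * s.
  by move=> a; rewrite rmorphM /= !conjE conj_E /s conjc_real.
have Hs2 : s * s = \prod_(k : 'I_n) (2^-1 : C).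
  rewrite /s -rmorphM -expr2 exprVn sqr_sqrtr ?exprn_ge0 // prodr_const card_ord.
  by rewrite fmorphV rmorphXn /= rmorph_nat exprVn.
have HW : forall w, \sum_w' Num.conj (pC w) * pC w' * G w w' =
    s * s * (spin R (w j) * cos (2 * beta))%:C +
    'i * (sin (2 * beta))%:C * ((\prod_(k : 'I_n) (2^-1 : C)) * (spin R (w j))%:C *
    E (gamma * (- (2 * spin R (w j))) * (1 - lambda * \sum_(k | adj j k) xs w k))).
  move=> w.
  transitivity (\sum_w' (Num.conj (pC w) * pC w' * gjv (w j) (w' j)) *
      (if [forall k, (k != j) ==> (w k == w' k)] then 1 else 0)).
    by apply: eq_bigr => w' _; rewrite HG mulrA.
  rewrite (@collapse n j w (fun w' => Num.conj (pC w) * pC w' * gjv (w j) (w' j))) /=.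
  rewrite /pC !HcE /gjv eqxx /flip ffunE eqxx.
  have -> : (w j == ~~ w j) = false by case: (w j).
  rewrite -/(flip j w).
  have HE1 : E (- aC adj lambda gamma w) * E (aC adj lambda gamma w) = 1.
    by rewrite -E_add addNr E0.
  have HE2 : E (- aC adj lambda gamma w) * E (aC adj lambda gamma (flip j w)) =
      E (gamma * (- (2 * spin R (w j))) * (1 - lambda * \sum_(k | adj j k) xs w k)).
    rewrite -E_add /aC; congr E.
    rewrite (_ : - - (gamma * Cv adj lambda w) + - (gamma * Cv adj lambda (flip j w))
       = gamma * (Cv adj lambda w - Cv adj lambda (flip j w))); last by ring.
    by rewrite Cv_diff //; ring.
  rewrite -Hs2.
  transitivity (s * s * (E (- aC adj lambda gamma w) * E (aC adj lambda gamma w)) *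
     (spin R (w j) * cos (2 * beta))%:C +
     s * s * (E (- aC adj lambda gamma w) * E (aC adj lambda gamma (flip j w))) *
     ('i * (spin R (w j) * sin (2 * beta))%:C)); first by ring.
  rewrite HE1 HE2 !rmorphM /=; ring.
under eq_bigr do rewrite HW.
rewrite big_split /= -!mulr_sumr.
have -> : \sum_(w : Defs.basis n) (spin R (w j) * cos (2 * beta))%:C = 0.
  transitivity ((cos (2 * beta))%:C * \sum_(w : Defs.basis n) (spin R (w j))%:C).
    by rewrite mulr_sumr; apply: eq_bigr => w _; rewrite rmorphM mulrC.
  by rewrite sum_spin0 mulr0.
rewrite mulr0 add0r.
rewrite T_lemma //.
have Hi : 'i * 'i = -1 :> C by rewrite -expr2 sqr_i.
rewrite !rmorphM /=.
transitivity (- ('i * 'i) * (sin (2 * beta))%:C * ((cos (2 * gamma * lambda))%:C ^+ degree adj j *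
  (sin (2 * gamma * (1 - (degree adj j)%:R * lambda)))%:C)).
  by rewrite rmorphXn; ring.
by rewrite Hi opprK mul1r rmorphXn mulrA.
Qed.

End S.

Local Close Scope classical_set_scope.

Theorem mainTheorem1 (R : realType) (n : nat) (adj : rel 'I_n)
    (Hg : simple_graph adj) (lambda beta gamma : R) (j : 'I_n) :
  expect (psi adj lambda beta gamma) (sigma_z j) =
  (sin (2 * beta) * (cos (2 * gamma * lambda)) ^+ degree adj j
     * sin (2 * gamma * (1 - (degree adj j)%:R * lambda)))%:C.
Proof. exact: main_sec. Qed.
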